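(* Let $\mathcal{X}\subseteq\mathbb{R}^d$ be closed and convex, let $h:\mathcal{X}\to\mathbb{R}$ be strictly convex and continuously differentiable, let $\mu>0$, and let $f:\mathcal{X}\to\mathbb{R}$ be continuously differentiable with a minimizer $x^\ast$ and $\mu$-uniformly convex with respect to $h$, i.e. $D_f(x,y)\ge\mu D_h(x,y)$ for all $x,y\in\mathcal{X}$. Let $\alpha,\beta:\mathbb{R}\to\mathbb{R}$ be smooth with $\beta$ nondecreasing and $\dot\beta_t\le e^{\alpha_t}$ for all $t$. Let $t\mapsto X_t\in\mathcal{X}$ be a differentiable curve such that $Z_t:=X_t+e^{-\alpha_t}\dot X_t\in\mathcal{X}$, $t\mapsto Z_t$ and $t\mapsto\nabla h(Z_t)$ are differentiable, and $$\frac{d}{dt}\nabla h(Z_t)=\dot\beta_t\nabla h(X_t)-\dot\beta_t\nabla h(Z_t)-\frac{e^{\alpha_t}}{\mu}\nabla f(X_t).$$ Then, for $x=x^\ast$, $$\frac{d}{dt}\Big\{e^{\beta_t}\mu D_h(x,Z_t)\Big\}\le-\frac{d}{dt}\Big\{e^{\beta_t}\big(f(X_t)-f(x)\big)\Big\};$$ if moreover $\dot\beta_t=e^{\alpha_t}$ for all $t$, the inequality holds for every $x\in\mathcal{X}$. Consequently $\mathcal{E}_t=e^{\beta_t}\big(\mu D_h(x,Z_t)+f(X_t)-f(x)\big)$ is nonincreasing in $t$ for $x=x^\ast$ (and for every $x\in\mathcal{X}$ when $\dot\beta_t=e^{\alpha_t}$).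
   Context: For a differentiable function $g$, $D_g(y,x)=g(y)-g(x)-\langle\nabla g(x),y-x\rangle$ denotes its Bregman divergence. *)

(* Defs.v *)
From HB Require Import structures.
From mathcomp Require Import all_boot all_order all_algebra.
From mathcomp Require Import all_classical all_reals all_analysis.
Set Implicit Arguments. Unset Strict Implicit. Unset Printing Implicit Defensive.
Import Order.TTheory GRing.Theory Num.Theory.
Import numFieldNormedType.Exports.
Local Open Scope classical_set_scope.
Local Open Scope ring_scope.

Definition dotp (R : realType) (d : nat) (u v : 'rV[R]_d) : R :=
  \sum_(i < d) u ord0 i * v ord0 i.

(* Bregman divergence D_g(y,x) = g(y) - g(x) - <grad g(x), y - x>,
   where gg is the gradient map of g. *)
Definition bregman (R : realType) (d : nat) (g : 'rV[R]_d -> R)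
  (gg : 'rV[R]_d -> 'rV[R]_d) (y x : 'rV[R]_d) : R :=
  g y - g x - dotp (gg x) (y - x).

Definition convex_set_rV (R : realType) (d : nat) (S : set 'rV[R]_d) : Prop :=
  forall x y (l : R), S x -> S y -> 0 <= l -> l <= 1 ->
    S (l *: x + (1 - l) *: y).

Definition strictly_convex_on (R : realType) (d : nat) (S : set 'rV[R]_d)
  (g : 'rV[R]_d -> R) : Prop :=
  forall x y (l : R), S x -> S y -> x <> y -> 0 < l -> l < 1 ->
    g (l *: x + (1 - l) *: y) < l * g x + (1 - l) * g y.

Definition C1_with_gradient (R : realType) (d : nat) (S : set 'rV[R]_d)
  (g : 'rV[R]_d -> R) (gg : 'rV[R]_d -> 'rV[R]_d) : Prop :=
  (forall x, S x -> differentiable g x /\ forall v, 'd g x v = dotp (gg x) v)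
  /\ {within S, continuous gg}.

Definition smooth_fun (R : realType) (a : R -> R) : Prop :=
  forall (n : nat) (t : R), derivable (derive1n n a) t 1.

(* Main.v *)
Require Import Defs.
From HB Require Import structures.
From mathcomp Require Import all_boot all_order all_algebra.
From mathcomp Require Import all_classical all_reals all_analysis.
From mathcomp Require Import ring lra.
Import Order.TTheory GRing.Theory Num.Theory.
Import numFieldNormedType.Exports.
Local Open Scope classical_set_scope.
Local Open Scope ring_scope.

Section H.
Context {R : realType}.
Context {d : nat}.
Implicit Types u v w : 'rV[R]_d.

Lemma dotpDl u v w : dotp (u + v) w = dotp u w + dotp v w.
Proof. by rewrite /dotp -big_split; apply: eq_bigr => i _; rewrite !mxE mulrDl. Qed.
Lemma dotpDr u v w : dotp w (u + v) = dotp w u + dotp w v.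
Proof. by rewrite /dotp -big_split; apply: eq_bigr => i _; rewrite !mxE mulrDr. Qed.
Lemma dotpZl (a : R) u w : dotp (a *: u) w = a * dotp u w.
Proof. by rewrite /dotp mulr_sumr; apply: eq_bigr => i _; rewrite !mxE mulrA. Qed.
Lemma dotpZr (a : R) u w : dotp w (a *: u) = a * dotp w u.
Proof. by rewrite /dotp mulr_sumr; apply: eq_bigr => i _; rewrite !mxE mulrCA. Qed.
Lemma dotpNl u w : dotp (- u) w = - dotp u w.
Proof. by rewrite -scaleN1r dotpZl mulN1r. Qed.
Lemma dotpNr u w : dotp w (- u) = - dotp w u.
Proof. by rewrite -scaleN1r dotpZr mulN1r. Qed.
Lemma dotpBl u v w : dotp (u - v) w = dotp u w - dotp v w.
Proof. by rewrite dotpDl dotpNl. Qed.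
Lemma dotpBr u v w : dotp w (u - v) = dotp w u - dotp w v.
Proof. by rewrite dotpDr dotpNr. Qed.

Lemma chain (V W : normedModType R) (g : V -> W) (u : R -> V) t :
  derivable u t 1 -> differentiable g (u t) ->
  derivable (g \o u) t 1 /\ 'D_1 (g \o u) t = 'd g (u t) ('D_1 u t).
Proof.
move=> Hu Hg; have du := (derivable1_diffP _ _).1 Hu.
have dgu : differentiable (g \o u) t := differentiable_comp du Hg.
split; first by apply/derivable1_diffP.
by rewrite deriveE // diff_comp //= [in RHS]deriveE.
Qed.

Lemma derive_dotp (u v : R -> 'rV[R]_d) t :
  derivable u t 1 -> derivable v t 1 ->
  derivable (fun s => dotp (u s) (v s)) t 1 /\
  'D_1 (fun s => dotp (u s) (v s)) t = dotp ('D_1 u t) (v t) + dotp (u t) ('D_1 v t).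
Proof.
move=> Hu Hv.
have cu i : derivable (fun s => u s ord0 i) t 1 by exact: ((derivable_mxP u t 1).1 Hu ord0 i).
have cv i : derivable (fun s => v s ord0 i) t 1 by exact: ((derivable_mxP v t 1).1 Hv ord0 i).
have E : (fun s => dotp (u s) (v s)) =
   \sum_(i < d) ((fun s => u s ord0 i) * (fun s => v s ord0 i)).
  by apply/funext => s; rewrite fct_sumE /dotp.
have dM i : derivable ((fun s => u s ord0 i) * (fun s => v s ord0 i)) t 1.
  exact: derivableM.
rewrite E; split; first exact: derivable_sum.
rewrite derive_sum // /dotp -big_split; apply: eq_bigr => i _.
rewrite deriveM // (derive_mx Hu) (derive_mx Hv) !mxE /=.
by rewrite /GRing.scale /= addrC mulrC [X in _ + X]mulrC.
Qed.

End H.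
Local Open Scope classical_set_scope.
Local Open Scope ring_scope.
Lemma bregman_ge0 (R : realType) d (S : set 'rV[R]_d) (h : 'rV[R]_d -> R) gh :
  strictly_convex_on S h -> C1_with_gradient S h gh ->
  forall x y, S x -> S y -> 0 <= bregman h gh y x.
Proof.
move=> sc [dh _] x y Sx Sy.
have [->|nxy] := eqVneq y x.
  rewrite /bregman (subrr (h x)) /dotp big1 ?subrr // => i _.
  by rewrite mxE mulr0.
have [dx dxE] := dh x Sx.
rewrite /bregman subr_ge0 -dxE -deriveE //.
set v := y - x.
have cv : derivable h x v by exact: diff_derivable.
pose Q := (fun l : R => l^-1 *: ((h \o shift x) (l *: v) - h x)).
have Hr : Q @ 0^'+ --> 'D_v h x.
  move=> A /cv /nbhs_ballP [_ /posnumP[e] xe_A].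
  by exists e%:num => //= z xe_z /gt_eqF/negbT/xe_A; exact.
apply: (cvgr_to_le Hr).
near=> l.
have l0 : 0 < l by near: l; exact: nbhs_right_gt.
have l1 : l < 1 by near: l; exact: nbhs_right_lt.
rewrite /Q /= /GRing.scale /=.
have E : l *: v + x = l *: y + (1 - l) *: x.
  by rewrite /v scalerBr scalerBl scale1r addrA addrAC.
rewrite E.
have nxy2 : y <> x by apply/eqP.
have := sc y x l Sy Sx nxy2 l0 l1.
move=> H.
rewrite mulrC ler_pdivrMr //.
rewrite mulrC; lra.
Unshelve. all: by end_near.
Qed.

Section H2.
Context {R : realType}.

Lemma dpM (f g : R -> R) t : derivable f t 1 -> derivable g t 1 ->
  derivable (fun s => f s * g s) t 1 /\
  'D_1 (fun s => f s * g s) t = 'D_1 f t * g t + f t * 'D_1 g t.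
Proof.
move=> df dg; have -> : (fun s => f s * g s) = f * g by [].
split; first exact: derivableM.
by rewrite deriveM // /GRing.scale /= addrC mulrC.
Qed.

Lemma dpB (V : normedModType R) (f g : R -> V) t : derivable f t 1 -> derivable g t 1 ->
  derivable (fun s => f s - g s) t 1 /\
  'D_1 (fun s => f s - g s) t = 'D_1 f t - 'D_1 g t.
Proof.
move=> df dg; have -> : (fun s => f s - g s) = f - g by [].
split; first exact: derivableB.
by rewrite deriveB.
Qed.

Lemma dpD (V : normedModType R) (f g : R -> V) t : derivable f t 1 -> derivable g t 1 ->
  derivable (fun s => f s + g s) t 1 /\
  'D_1 (fun s => f s + g s) t = 'D_1 f t + 'D_1 g t.
Proof.
move=> df dg; have -> : (fun s => f s + g s) = f + g by [].
split; first exact: derivableD.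
by rewrite deriveD.
Qed.

Lemma dpC (V : normedModType R) (c : V) t :
  derivable (fun _ : R => c) t 1 /\ 'D_1 (fun _ : R => c) t = 0.
Proof. by split; [exact: derivable_cst | exact: derive_cst]. Qed.

Lemma homo_derive_ge0 (b : R -> R) t : {homo b : s t / s <= t} ->
  derivable b t 1 -> 0 <= 'D_1 b t.
Proof.
move=> hb cv.
pose Q := (fun l : R => l^-1 *: ((b \o shift t) (l *: 1) - b t)).
have Hr : Q @ 0^'+ --> 'D_1 b t.
  move=> A /cv /nbhs_ballP [_ /posnumP[e] xe_A].
  by exists e%:num => //= z xe_z /gt_eqF/negbT/xe_A; exact.
apply: (cvgr_to_ge Hr).
near=> l.
have l0 : 0 < l by near: l; exact: nbhs_right_gt.
rewrite /Q /= /GRing.scale /= mulr1.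
apply: mulr_ge0; first by rewrite invr_ge0 ltW.
rewrite subr_ge0; apply: hb; lra.
Unshelve. all: by end_near.
Qed.

Lemma nonincr (F : R -> R) : (forall t, derivable F t 1) ->
  (forall t, 'D_1 F t <= 0) -> {homo F : s t /~ s <= t}.
Proof.
move=> dF dF0 s t st.
apply: (@ler0_derive1_le_cc R F t s) => //.
- by move=> z _; rewrite derive1E.
- by apply: derivable_within_continuous => z _; exact: dF.
- by rewrite in_itv /= lexx st.
- by rewrite in_itv /= lexx st.
Qed.

End H2.
Arguments chain {R V W g u t}.
Arguments derive_dotp {R d u v t}.
Arguments dpM {R f g t}.
Arguments dpB {R V f g t}.
Arguments dpD {R V f g t}.
Arguments dpC {R V} c t.
Lemma Dexp (R : realType) (r : R) : 'D_1 expR r = expR r.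
Proof. by have := derive_expR R; move/(congr1 (fun F => F r)). Qed.

Theorem proposition3 (R : realType) (d : nat) (Xs : set 'rV[R]_d)
  (h f : 'rV[R]_d -> R) (gh gf : 'rV[R]_d -> 'rV[R]_d) (mu : R)
  (xstar : 'rV[R]_d) (alpha beta : R -> R) (X : R -> 'rV[R]_d) :
  closed Xs -> convex_set_rV Xs ->
  strictly_convex_on Xs h -> C1_with_gradient Xs h gh ->
  0 < mu ->
  C1_with_gradient Xs f gf ->
  Xs xstar -> (forall x, Xs x -> f xstar <= f x) ->
  (forall x y, Xs x -> Xs y -> mu * bregman h gh x y <= bregman f gf x y) ->
  smooth_fun alpha -> smooth_fun beta ->
  {homo beta : s t / s <= t} ->
  (forall t, derive1 beta t <= expR (alpha t)) ->
  let Z := fun t => X t + expR (- alpha t) *: derive1 X t in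
  (forall t, derivable X t 1) ->
  (forall t, Xs (X t)) ->
  (forall t, Xs (Z t)) ->
  (forall t, derivable Z t 1) ->
  (forall t, derivable (gh \o Z) t 1) ->
  (forall t, derive1 (gh \o Z) t =
     derive1 beta t *: gh (X t) - derive1 beta t *: gh (Z t)
     - (expR (alpha t) / mu) *: gf (X t)) ->
  let ineq := fun x t =>
    derive1 (fun s => expR (beta s) * (mu * bregman h gh x (Z s))) t
    <= - derive1 (fun s => expR (beta s) * (f (X s) - f x)) t in
  let E := fun x t =>
    expR (beta t) * (mu * bregman h gh x (Z t) + f (X t) - f x) in
  [/\ (forall t, ineq xstar t),
      ((forall t, derive1 beta t = expR (alpha t)) ->
         forall x, Xs x -> forall t, ineq x t),
      {homo E xstar : s t /~ s <= t} &
      ((forall t, derive1 beta t = expR (alpha t)) ->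
         forall x, Xs x -> {homo E x : s t /~ s <= t})].
Proof.
move=> clX cvX sch C1h mu0 C1f Sxs minf unif sma smb hb hb' Z dX SX SZ dZ dGZ GZE ineq E.
have C1h' := C1h; have C1f' := C1f.
move: C1h C1f => [dh _] [df _].
have dbeta t : derivable beta t 1 := smb 0%N t.
have deb t : derivable (fun s => expR (beta s)) t 1 /\
    'D_1 (fun s => expR (beta s)) t = expR (beta t) * 'D_1 beta t.
  have dE : differentiable expR (beta t) by apply/derivable1_diffP; exact: (@derivable_expR R (beta t)).
  split.
    apply/derivable1_diffP; apply: (@differentiable_comp _ _ _ _ beta expR) => //.
    exact/derivable1_diffP.
  have := derive1_comp (dbeta t) (@derivable_expR R (beta t)).
  by rewrite !derive1E Dexp.
have key : forall x, Xs x -> forall t, (x = xstar \/ derive1 beta t = expR (alpha t)) ->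
   [/\ derivable (fun s => expR (beta s) * (mu * bregman h gh x (Z s))) t 1,
       derivable (fun s => expR (beta s) * (f (X s) - f x)) t 1 &
    'D_1 (fun s => expR (beta s) * (mu * bregman h gh x (Z s))) t <=
    - 'D_1 (fun s => expR (beta s) * (f (X s) - f x)) t].
  move=> x Sx t hyp.
  have [dhZ DhZ] : derivable (h \o Z) t 1 /\ 'D_1 (h \o Z) t = dotp (gh (Z t)) ('D_1 Z t).
    have [dd dE] := dh (Z t) (SZ t).
    have [c1 c2] := chain (dZ t) dd.
    by split => //; rewrite c2 dE.
  have [dfX DfX] : derivable (f \o X) t 1 /\ 'D_1 (f \o X) t = dotp (gf (X t)) ('D_1 X t).
    have [dd dE] := df (X t) (SX t).
    have [c1 c2] := chain (dX t) dd.
    by split => //; rewrite c2 dE.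
  have [dxZ DxZ] := dpB (dpC x t).1 (dZ t).
  have [ddot Ddot] := derive_dotp (dGZ t) dxZ.
  have [d1 D1] := dpB (dpC (h x) t).1 dhZ.
  have [dBm DBm] := dpB d1 ddot.
  have [dmB DmB] := dpM (dpC mu t).1 dBm.
  have [dA DA] := dpM (deb t).1 dmB.
  have [dF DF] := dpB dfX (dpC (f x) t).1.
  have [dB DB] := dpM (deb t).1 dF.
  split.
  - exact: dA.
  - exact: dB.
  rewrite DA DB DmB DBm D1 Ddot DxZ DF DhZ DfX (deb t).2 !(dpC _ t).2.
  have GZt := GZE t; rewrite !derive1E in GZt.
  have X'E : 'D_1 X t = expR (alpha t) *: (Z t - X t).
    have -> : Z t - X t = expR (- alpha t) *: derive1 X t.
      by rewrite /Z [X t + _]addrC addrK.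
    rewrite scalerA -derive1E.
    by rewrite expRxMexpNx_1 scale1r.
  rewrite /= GZt X'E !sub0r !subr0 !dotpNr dotpZr !dotpBl !dotpZl.
  have sp : x - X t = (x - Z t) + (Z t - X t) by rewrite addrA subrK.
  have H1 := @bregman_ge0 _ _ _ _ _ sch C1h' _ _ (SX t) (SZ t).
  have H2 := unif x (X t) Sx (SX t).
  rewrite /bregman in H1 H2; rewrite sp (dotpDr (x - Z t) (Z t - X t)) in H2.
  rewrite (dotpDr (x - Z t) (Z t - X t)) in H2.
  have b0 : 0 <= 'D_1 beta t := @homo_derive_ge0 _ beta t hb (dbeta t).
  have bea := hb' t; rewrite derive1E in bea.
  have emu : mu * (expR (alpha t) / mu * dotp (gf (X t)) (x - Z t)) =
             expR (alpha t) * dotp (gf (X t)) (x - Z t).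
    by field; rewrite gt_eqF.
  have eb0 := expR_gt0 (beta t).
  set b' := 'D_1 beta t in b0 bea hyp emu *.
  set ea := expR (alpha t) in bea hyp emu *.
  set eb := expR (beta t) in eb0 *.
  set p3 := dotp (gf (X t)) (x - Z t) in emu H2 *.
  set q := dotp (gf (X t)) (Z t - X t) in H2 *.
  have M1 := mulr_ge0 (ltW mu0) H1.
  have H : mu * (h x - h (Z t) - dotp (gh (X t)) (x - Z t)) <= f x - f (X t) - (p3 + q).
    lra.
  have K1 := ler_wpM2l b0 H.
  have K2 : (ea - b') * (p3 + q) <= 0.
    case: hyp => [xs|e].
      have Hs : p3 + q <= 0.
        have U := unif x (X t) Sx (SX t).
        have G := @bregman_ge0 _ _ _ _ _ sch C1h' _ _ (SX t) Sx.
        have Mg := mulr_ge0 (ltW mu0) G.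
        have mn := minf _ (SX t).
        rewrite -xs in mn.
        rewrite /bregman in U Mg; rewrite sp !(dotpDr (x - Z t) (Z t - X t)) -/p3 -/q in U Mg.
        lra.
      by apply: mulr_ge0_le0 => //; lra.
    by rewrite /b' -derive1E e subrr mul0r.
  have S0 : b' * (mu * (h x - h (Z t) - dotp (gh (Z t)) (x - Z t)))
     - mu * (b' * dotp (gh (X t)) (x - Z t) - b' * dotp (gh (Z t)) (x - Z t))
     + ea * p3 + b' * (f (X t) - f x) + ea * q <= 0.
    lra.
  have S1 := mulr_ge0_le0 (ltW eb0) S0.
  rewrite -subr_ge0.
  set S := (X in eb * X) in S1.
  have -> : - (eb * b' * (f (X t) - f x) + eb * (ea * q)) -
    (eb * b' * (mu * (h x - h (Z t) - dotp (gh (Z t)) (x - Z t))) +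
     eb * (0 * (h x - h (Z t) - dotp (gh (Z t)) (x - Z t)) +
     mu * (- dotp (gh (Z t)) ('D_1 Z t) -
       (b' * dotp (gh (X t)) (x - Z t) - b' * dotp (gh (Z t)) (x - Z t) - ea / mu * p3 -
        dotp (gh (Z t)) ('D_1 Z t))))) = - (eb * S).
    rewrite /S; field; by rewrite gt_eqF.
  by rewrite oppr_ge0.
have Emono : forall x, Xs x ->
    (forall t, x = xstar \/ derive1 beta t = expR (alpha t)) -> {homo E x : s t /~ s <= t}.
  move=> x Sx hx.
  have -> : E x = (fun s => expR (beta s) * (mu * bregman h gh x (Z s)) +
                           expR (beta s) * (f (X s) - f x)).
    by apply/funext => s; rewrite /E; ring.
  apply: nonincr => t; have [dA dB le] := key x Sx t (hx t).
    exact: (dpD dA dB).1.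
  rewrite (dpD dA dB).2; lra.
split.
- by move=> t; rewrite /ineq !derive1E; case: (key xstar Sxs t (or_introl erefl)).
- by move=> e x Sx t; rewrite /ineq !derive1E; case: (key x Sx t (or_intror (e t))).
- by apply: Emono => // t; left.
- by move=> e x Sx; apply: Emono => // t; right.
Qed.
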